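(* Let $K\subseteq\mathbb{R}^m$ be closed, $f:\mathbb{R}^n\to\mathbb{R}$ and $G:\mathbb{R}^n\to\mathbb{R}^m$ be locally Lipschitz continuous and second-order directionally differentiable at $x^*$, and let $x^*$ be a locally optimal solution of the problem $\min f(x)$ s.t. $G(x)\in K$, with feasible set $\Psi=\{x:G(x)\in K\}$. Then: (i) for every $d\in\mathcal{T}_\Psi(x^* )$ with $f'(x^*;d)\le0$ and all $w\in\mathcal{T}^2_\Psi(x^*;d)$, one has $f''(x^*;d,w)\ge0$; (ii) if MSCQ for $\Psi$ holds at $x^*$, then for every $d\in\mathcal{C}(x^* ):=\{d\in\mathbb{R}^n: G'(x^*;d)\in\mathcal{T}_K(G(x^* )),\ f'(x^*;d)\le0\}$ and all $w\in\mathbb{R}^n$ satisfying $G''(x^*;d,w)\in\mathcal{T}^2_K(G(x^* );G'(x^*;d))$, one has $f''(x^*;d,w)\ge0$.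
   Context: Definitions. For $g:\mathbb{R}^n\to\mathbb{R}^k$: $g'(x;d)=\lim_{t\downarrow0}(g(x+td)-g(x))/t$; $g$ is second-order directionally differentiable at $x$ if for every $d$, $g'(x;d)$ exists and $g''(x;d,w):=\lim_{t\downarrow0}\frac{g(x+td+\frac12t^2w)-g(x)-tg'(x;d)}{\frac12t^2}$ exists for all $w$. For a set $C$ and $x^*\in C$: tangent cone $\mathcal{T}_C(x^* )=\{d:\exists t_k\downarrow0,d^k\to d,x^*+t_kd^k\in C\}$; outer second-order tangent set $\mathcal{T}^2_C(x^*;d)=\{w:\exists t_k\downarrow0,w^k\to w,x^*+t_kd+\frac12t_k^2w^k\in C\}$. MSCQ for $\Psi$ holds at $x^*$ if there exist a neighborhood $U$ of $x^*$ and $\kappa>0$ with $\mathrm{dist}(x,\Psi)\le\kappa\,\mathrm{dist}(G(x),K)$ for all $x\in U$. *)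

(* Defs.v *)
From HB Require Import structures.
From mathcomp Require Import all_boot all_order all_algebra.
From mathcomp Require Import all_classical all_reals all_analysis.
Set Implicit Arguments. Unset Strict Implicit. Unset Printing Implicit Defensive.
Import Order.TTheory GRing.Theory Num.Theory.
Import numFieldNormedType.Exports.
Local Open Scope classical_set_scope.
Local Open Scope ring_scope.

Section Defs.
Context {R : realType}.

Definition dir_deriv {U V : normedModType R} (g : U -> V) (x d : U) (l : V) :=
  (fun t : R => t^-1 *: (g (x + t *: d) - g x)) @ 0^'+ --> l.

Definition second_dir_deriv {U V : normedModType R} (g : U -> V) (x d : U)
    (g1d : V) (w : U) (l : V) :=
  (fun t : R => ((2^-1 * t ^+ 2)^-1) *:
     (g (x + t *: d + (2^-1 * t ^+ 2) *: w) - g x - t *: g1d)) @ 0^'+ --> l.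

(* g is second-order directionally differentiable at x, with g'(x;.) = g1
   and g''(x;.,.) = g2 *)
Definition sodd {U V : normedModType R} (g : U -> V) (x : U)
    (g1 : U -> V) (g2 : U -> U -> V) :=
  forall d, dir_deriv g x d (g1 d) /\
    forall w, second_dir_deriv g x d (g1 d) w (g2 d w).

Definition locally_lipschitz {U V : normedModType R} (g : U -> V) :=
  forall x0 : U, exists2 r : R, 0 < r & exists L : R, forall x y,
    `|x - x0| < r -> `|y - x0| < r -> `|g x - g y| <= L * `|x - y|.

Definition tangent_cone {U : normedModType R} (C : set U) (x d : U) :=
  exists (t : nat -> R) (dk : nat -> U),
    [/\ forall k, 0 < t k, t @ \oo --> 0, dk @ \oo --> d
      & forall k, C (x + t k *: dk k)].

Definition second_tangent_set {U : normedModType R} (C : set U) (x d w : U) :=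
  exists (t : nat -> R) (wk : nat -> U),
    [/\ forall k, 0 < t k, t @ \oo --> 0, wk @ \oo --> w
      & forall k, C (x + t k *: d + (2^-1 * t k ^+ 2) *: wk k)].

Definition dist_set {U : normedModType R} (x : U) (A : set U) : R :=
  inf [set `|x - y| | y in A].

Definition MSCQ {U V : normedModType R} (G : U -> V) (K : set V) (xs : U) :=
  exists U0 : set U, nbhs xs U0 /\ exists2 kappa : R, 0 < kappa &
    forall x, U0 x ->
      dist_set x [set y | K (G y)] <= kappa * dist_set (G x) K.

Definition local_min {U V : normedModType R} (f : U -> R) (G : U -> V)
    (K : set V) (xs : U) :=
  K (G xs) /\ \forall x \near xs, K (G x) -> f xs <= f x.

End Defs.

(* Main.v *)
Require Import Defs.
From HB Require Import structures.
From mathcomp Require Import all_boot all_order all_algebra.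
From mathcomp Require Import all_classical all_reals all_analysis.
From mathcomp Require Import lra.
Import Order.TTheory GRing.Theory Num.Theory.
Import numFieldNormedType.Exports.
Local Open Scope classical_set_scope.
Local Open Scope ring_scope.

Section Helpers.
Context {R : realType}.

Lemma seq_right (t : nat -> R) : (forall k, 0 < t k) -> t @ \oo --> 0 ->
  t @ \oo --> (0:R)^'+.
Proof.
move=> tpos t0 A /= hA.
apply: (@filterS _ \oo _ (fun k => 0 < t k -> A (t k)) (fun k => A (t k))).
  by move=> k; apply; exact: tpos.
exact: (t0 _ hA).
Qed.

Lemma small_cvg (U : normedModType R) (x0 : U) (t : nat -> R) (d : U) (v : nat -> U) (v0 : U) :
  t @ \oo --> 0 -> v @ \oo --> v0 ->
  (fun k => x0 + t k *: d + (2^-1 * t k ^+ 2) *: v k) @ \oo --> x0.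
Proof.
move=> t0 vv.
have : (fun k => x0 + t k *: d + (2^-1 * (t k * t k)) *: v k) @ \oo -->
   x0 + (0 : R) *: d + (2^-1 * (0 * 0)) *: v0.
  apply: cvgD; first apply: cvgD; first exact: cvg_cst.
    by apply: cvgZ => //; exact: cvg_cst.
  apply: cvgZ => //; apply: cvgM; first exact: cvg_cst.
  exact: cvgM.
by rewrite !mul0r mulr0 !scale0r !addr0.
Qed.
Arguments small_cvg {U} x0 {t} d {v v0}.

Lemma part1 (U : normedModType R) (f : U -> R) (Psi : set U) (xs d w : U)
  (f1d l : R) :
  locally_lipschitz f -> (\forall x \near xs, Psi x -> f xs <= f x) ->
  second_dir_deriv f xs d f1d w l -> f1d <= 0 ->
  second_tangent_set Psi xs d w -> 0 <= l.
Proof.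
move=> /(_ xs) [r rpos [L Lip]] hmin hq f1le [t [wk [tpos t0 wkw Pk]]].
have qt := cvg_comp _ _ (@seq_right t tpos t0) hq.
have xk : (fun k => xs + t k *: d + (2^-1 * t k ^+ 2) *: wk k) @ \oo --> xs.
  exact: (small_cvg xs d t0 wkw).
have zk : (fun k => xs + t k *: d + (2^-1 * t k ^+ 2) *: w) @ \oo --> xs.
  exact: (small_cvg xs d t0 (cvg_cst w)).
have bk : (fun k => - L * `|wk k - w|) @ \oo --> (0:R).
  have -> : (0:R) = - L * `|w - w| by rewrite subrr normr0 mulr0.
  apply: cvgM; first exact: cvg_cst.
  apply: cvg_norm; apply: cvgB => //; exact: cvg_cst.
apply: (ler_cvg_to bk qt).
have h1 : \forall k \near \oo, Psi (xs + t k *: d + (2^-1 * t k ^+ 2) *: wk k) -> f xs <= f (xs + t k *: d + (2^-1 * t k ^+ 2) *: wk k) := xk _ hmin.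
have h2 : \forall k \near \oo, `|xs - (xs + t k *: d + (2^-1 * t k ^+ 2) *: wk k)| < r.
  by apply: cvgr_dist_lt.
have h3 : \forall k \near \oo, `|xs - (xs + t k *: d + (2^-1 * t k ^+ 2) *: w)| < r.
  by apply: cvgr_dist_lt.
near=> k.
have m1 : Psi (xs + t k *: d + (2^-1 * t k ^+ 2) *: wk k) -> f xs <= f (xs + t k *: d + (2^-1 * t k ^+ 2) *: wk k).
  by near: k.
have m2 : `|xs - (xs + t k *: d + (2^-1 * t k ^+ 2) *: wk k)| < r by near: k.
have m3 : `|xs - (xs + t k *: d + (2^-1 * t k ^+ 2) *: w)| < r by near: k.
move/(_ (Pk k)): m1 => m1.
set a := 2^-1 * t k ^+ 2.
have apos : 0 < a by rewrite /a mulr_gt0 // ?invr_gt0 // exprn_gt0.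
have := Lip (xs + t k *: d + a *: wk k) (xs + t k *: d + a *: w).
rewrite -normrN opprB in m2. rewrite -normrN opprB in m3.
move=> /(_ m2 m3).
rewrite opprD addrACA subrr add0r -scalerBr normrZ gtr0_norm // => lip.
have tf : t k * f1d <= 0 by rewrite pmulr_rle0.
rewrite /comp /= -/a.
have sc : forall x y : R, x *: y = x * y by [].
rewrite !sc ler_pdivlMl //.
have := ler_norm (f (xs + t k *: d + a *: wk k) - f (xs + t k *: d + a *: w)).
move: lip m1 tf.
set A := f (xs + t k *: d + a *: wk k).
set B := f (xs + t k *: d + a *: w).
set N := `|A - B|.
move=> lip m1 tf h.
nra.
Unshelve. all: end_near.
Qed.

Lemma part2 (U V : normedModType R) (G : U -> V) (K : set V) (xs d w : U)
  (G1d G2dw : V) :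
  MSCQ G K xs -> K (G xs) -> second_dir_deriv G xs d G1d w G2dw ->
  second_tangent_set K (G xs) G1d G2dw ->
  second_tangent_set [set x | K (G x)] xs d w.
Proof.
move=> [U0 [nU0 [kap kpos msc]]] KGxs hG [t [vk [tpos t0 vkv Kk]]].
set Psi := [set x | K (G x)].
pose a k := 2^-1 * t k ^+ 2.
have apos : forall k, 0 < a k.
  by move=> k; rewrite /a mulr_gt0 // ?invr_gt0 // exprn_gt0.
pose xk k := xs + t k *: d + a k *: w.
have ex : forall k, exists y, Psi y /\ `|xk k - y| < dist_set (xk k) Psi + a k * t k.
  move=> k.
  have hinf : has_inf [set `|xk k - y| | y in Psi].
    split; first by exists `|xk k - xs|, xs.
    by exists 0 => _ [y _ <-].
  have [e [y Py <-] ey] := inf_adherent (mulr_gt0 (apos k) (tpos k)) hinf.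
  by exists y.
have [yk hyk] := choice ex.
exists t, (fun k => w + (a k)^-1 *: (yk k - xk k)); split => //; last first.
  move=> k; rewrite -/(a k) scalerDr scalerA mulfV ?gt_eqF // scale1r addrA.
  by rewrite -/(xk k) subrKC; case: (hyk k).
apply/cvgrPdist_lt => eps epos.
have ek := cvg_comp _ _ (@seq_right t tpos t0) hG.
set e := (X in X @ \oo --> _) in ek.
have rhs : (fun k => kap * `|e k - vk k| + t k) @ \oo --> (0:R).
  have -> : (0:R) = kap * `|G2dw - G2dw| + 0 by rewrite subrr normr0 mulr0 addr0.
  apply: cvgD => //; apply: cvgM; first exact: cvg_cst.
  by apply: cvg_norm; apply: cvgB.
have hr : \forall k \near \oo, kap * `|e k - vk k| + t k < eps.
  by apply: (cvgr_lt 0).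
have hU : \forall k \near \oo, U0 (xk k) := (small_cvg xs d t0 (cvg_cst w)) _ nU0.
near=> k.
have hUk : U0 (xk k) by near: k; apply: hU.
have hrk : kap * `|e k - vk k| + t k < eps by near: k.
apply: le_lt_trans hrk.
rewrite opprD addrA subrr add0r normrN normrZ gtr0_norm ?invr_gt0 //.
rewrite ler_pdivrMl // distrC.
case: (hyk k) => Py hy.
have d1 := msc _ hUk.
have d2 : dist_set (G (xk k)) K <= `|G (xk k) - (G xs + t k *: G1d + a k *: vk k)|.
  apply: ge_inf; first by exists 0 => _ [z _ <-].
  by exists (G xs + t k *: G1d + a k *: vk k).
have eq : G (xk k) - (G xs + t k *: G1d + a k *: vk k) = a k *: (e k - vk k).
  rewrite scalerBr /e /comp /= scalerA mulfV ?gt_eqF // scale1r.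
  by rewrite opprD addrA opprD addrA.
rewrite eq normrZ gtr0_norm // in d2.
have d3 : kap * dist_set (G (xk k)) K <= kap * (a k * `|e k - vk k|).
  by rewrite ler_wpM2l // ltW.
move: hy d1 d3 (apos k) (tpos k).
set D := dist_set _ _. set D2 := dist_set _ _. set M := `|e k - vk k|.
move=> *; nra.
Unshelve. all: end_near.
Qed.

End Helpers.
Arguments part1 {R U f Psi xs d w f1d l}.
Arguments part2 {R U V G K xs d w G1d G2dw}.

Theorem theorem3p2 (R : realType) (n m : nat) (K : set 'rV[R]_m)
  (f : 'rV[R]_n -> R) (G : 'rV[R]_n -> 'rV[R]_m) (xs : 'rV[R]_n)
  (f1 : 'rV[R]_n -> R) (f2 : 'rV[R]_n -> 'rV[R]_n -> R)
  (G1 : 'rV[R]_n -> 'rV[R]_m) (G2 : 'rV[R]_n -> 'rV[R]_n -> 'rV[R]_m) :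
  closed K ->
  locally_lipschitz f -> locally_lipschitz G ->
  sodd f xs f1 f2 -> sodd G xs G1 G2 ->
  local_min f G K xs ->
  (forall d, tangent_cone [set x | K (G x)] xs d -> f1 d <= 0 ->
     forall w, second_tangent_set [set x | K (G x)] xs d w -> 0 <= f2 d w)
  /\
  (MSCQ G K xs ->
   forall d, tangent_cone K (G xs) (G1 d) -> f1 d <= 0 ->
     forall w, second_tangent_set K (G xs) (G1 d) (G2 d w) -> 0 <= f2 d w).
Proof.
move=> _ Lf _ sf sG [KGxs hmin]; split.
  move=> d _ f1le w hw.
  exact: (part1 Lf hmin (proj2 (sf d) w) f1le hw).
move=> hM d _ f1le w hw.
apply: (part1 Lf hmin (proj2 (sf d) w) f1le).
exact: (part2 hM KGxs (proj2 (sG d) w) hw).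
Qed.
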